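(* Let $N\ge 2$ and let $T^{H,F}_N$ be the period of the F-type Hadamard walk on the cycle $C_N$. Then $$T^{H,F}_N=\begin{cases}8,& N=2,\\ 8,& N=4,\\ 24,& N=8,\\ \infty,&\text{otherwise.}\end{cases}$$
   Context: Let $N\ge 2$ and identify the vertex set of the cycle graph $C_N$ with $\mathbb{Z}/N\mathbb{Z}$. The state space is $\mathcal H=\mathbb{C}^{N}\otimes\mathbb{C}^2$ with orthonormal basis $\{|x\rangle\otimes|\leftarrow\rangle,\ |x\rangle\otimes|\rightarrow\rangle : x\in\mathbb{Z}/N\mathbb{Z}\}$. The shift operator $S$ is the unitary with $S(|x\rangle\otimes|\leftarrow\rangle)=|x-1\rangle\otimes|\leftarrow\rangle$ and $S(|x\rangle\otimes|\rightarrow\rangle)=|x+1\rangle\otimes|\rightarrow\rangle$ (indices mod $N$). For a unitary $2\times2$ local coin $A$ (in the basis $(|\leftarrow\rangle,|\rightarrow\rangle)$) the time-evolution operator is $U=S\,(I_N\otimes A)$. The F-type Hadamard walk uses $A^{H,F}=\frac{1}{\sqrt2}\begin{bmatrix}1&-1\\1&1\end{bmatrix}$, with time-evolution operator $U^{H,F}_N$. The period of a walk with time-evolution operator $U$ is $\inf\{n\ge1: U^n=I\}$, defined to be $\infty$ if no such $n$ exists. *)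

(* Defs.v *)
From mathcomp Require Import all_boot all_order all_algebra all_field.
Set Implicit Arguments. Unset Strict Implicit. Unset Printing Implicit Defensive.
Import GRing.Theory Num.Theory.
Local Open Scope ring_scope.

(* Vertices of C_N: 'I_N (= Z/NZ, N >= 2), with cyclic successor ordS and
   predecessor ord_pred.  Coin states: false = |<-|, true = |->|.
   A vector of H = C^N (x) C^2 is a function 'I_N * bool -> algC
   (coefficients in the standard orthonormal basis |x> (x) |c>). *)
Definition state (N : nat) := {ffun 'I_N * bool -> algC}.

(* I_N (x) A^{H,F}, A^{H,F} = 1/sqrt2 [[1,-1],[1,1]] in basis (|<-|, |->|). *)
Definition coinHF (N : nat) (psi : state N) : state N :=
  [ffun p : 'I_N * bool =>
     if p.2 then (psi (p.1, false) + psi (p.1, true)) / sqrtC 2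
     else (psi (p.1, false) - psi (p.1, true)) / sqrtC 2].

(* Shift S: |x>|<-| |-> |x-1>|<-|,  |x>|->| |-> |x+1>|->|.
   Hence (S psi)(y,<-) = psi(y+1,<-) and (S psi)(y,->) = psi(y-1,->). *)
Definition shift (N : nat) (psi : state N) : state N :=
  [ffun p : 'I_N * bool =>
     if p.2 then psi (ord_pred p.1, true) else psi (ordS p.1, false)].

Definition UHF (N : nat) (psi : state N) : state N := shift (coinHF psi).

Definition pow_is_id (N n : nat) : Prop := forall psi : state N, iter n (@UHF N) psi = psi.

(* The period inf{n >= 1 : U^n = I}: Some T for a finite period T, None for infinity. *)
Definition period_is (N : nat) (T : option nat) : Prop :=
  match T with
  | Some t => (0 < t)%N /\ pow_is_id N t /\ (forall m, (0 < m < t)%N -> ~ pow_is_id N m)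
  | None => forall n, (0 < n)%N -> ~ pow_is_id N n
  end.

(* Main.v *)
Require Import Defs.
From mathcomp Require Import all_boot all_order all_algebra all_field.
From mathcomp Require Import ring zify.
Set Implicit Arguments. Unset Strict Implicit. Unset Printing Implicit Defensive.
Import GRing.Theory Num.Theory.
Local Open Scope ring_scope.


Definition Vs {A : Type} (N : nat) (ad sb : A -> A -> A) (d : A)
  (st : seq A * seq A) : seq A * seq A :=
 (mkseq (fun y => sb (nth d st.1 (y.+1 %% N)) (nth d st.2 (y.+1 %% N))) N,
  mkseq (fun y => ad (nth d st.1 ((y+N).-1 %% N)) (nth d st.2 ((y+N).-1 %% N))) N).

Definition cadd (K : nat) (c e : seq int) := mkseq (fun j => nth 0 c j + nth 0 e j) K.
Definition csub (K : nat) (c e : seq int) := mkseq (fun j => nth 0 c j - nth 0 e j) K.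
Definition S0 (N : nat) (c : int) : seq (seq int) * seq (seq int) :=
  (mkseq (fun x => mkseq (fun j => (j == x)%:R * c) (N + N)) N,
   mkseq (fun x => mkseq (fun j => (j == N + x)%:R * c) (N + N)) N).
Definition chk N m c :=
  iter m (Vs N (cadd (N + N)) (csub (N + N)) [::]) (S0 N 1) == S0 N c.

Lemma chk2 : chk 2 8 16. Proof. by vm_compute. Qed.
Lemma chk4 : chk 4 8 16. Proof. by vm_compute. Qed.
Lemma chk8 : chk 8 24 4096. Proof. by vm_compute. Qed.


Lemma nth_map_d (A B : Type) (g : A -> B) d s i : nth (g d) (map g s) i = g (nth d s i).
Proof. by elim: s i => [|x s IH] [|i] //=. Qed.

Lemma Vs_map (A B : Type) N (g h : A -> B) ad sb d ad' sb' d' :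
  (forall a b, h (ad a b) = ad' (g a) (g b)) ->
  (forall a b, h (sb a b) = sb' (g a) (g b)) -> g d = d' -> forall st,
  (map h (Vs N ad sb d st).1, map h (Vs N ad sb d st).2)
   = Vs N ad' sb' d' (map g st.1, map g st.2).
Proof.
move=> Had Hsb <- st; rewrite /Vs /mkseq /= -!map_comp; congr pair; apply: eq_map => y /=;
by rewrite !nth_map_d.
Qed.

Definition tos n (psi : state n.+1) : seq algC * seq algC :=
  (mkseq (fun x => psi (inord x, false)) n.+1, mkseq (fun x => psi (inord x, true)) n.+1).

Lemma tos_inj n (phi psi : state n.+1) : tos phi = tos psi -> phi = psi.
Proof.
move=> h; have h1 := congr1 fst h; have h2 := congr1 snd h; rewrite /= in h1 h2.
apply: (proj1 (@ffunP _ _ phi psi)) => -[x c].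
have hx : (x < n.+1)%N := ltn_ord x.
case: c.
- by move: (congr1 (fun s => nth 0 s x) h2) => /=; rewrite !nth_mkseq // inord_val.
- by move: (congr1 (fun s => nth 0 s x) h1) => /=; rewrite !nth_mkseq // inord_val.
Qed.

Lemma tos_UHF n (psi : state n.+1) :
  tos (UHF psi) = Vs n.+1 (fun a b => (a + b) / sqrtC 2) (fun a b => (a - b) / sqrtC 2) 0 (tos psi).
Proof.
rewrite /tos /Vs /=; congr pair; apply: (@eq_from_nth _ 0); rewrite ?size_mkseq // => y hy;
rewrite !nth_mkseq // ?ltn_pmod // /UHF /shift /coinHF !ffunE /=.
all: try (have -> : ordS (inord y : 'I_n.+1) = inord (y.+1 %% n.+1) by
    apply/val_inj; rewrite /= inordK // inordK // ltn_pmod).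
all: try (have -> : ord_pred (inord y : 'I_n.+1) = inord ((y + n.+1).-1 %% n.+1) by
    apply/val_inj; rewrite /= inordK // inordK // ltn_pmod).
all: done.
Qed.

Lemma map_mkseq' (A B : Type) (f : A -> B) g n : map f (mkseq g n) = mkseq (f \o g) n.
Proof. by rewrite /mkseq map_comp. Qed.

Lemma eq_in_mkseq (A : Type) (f g : nat -> A) n :
  (forall i, (i < n)%N -> f i = g i) -> mkseq f n = mkseq g n.
Proof. by move=> h; apply/eq_in_map => i; rewrite mem_iota add0n => /andP [_ /h]. Qed.

Definition VsC N := Vs N (fun a b : algC => (a + b) / sqrtC 2) (fun a b => (a - b) / sqrtC 2) 0.
Definition VsA N := Vs N (cadd (N + N)%N) (csub (N + N)%N) [::].

Definition fk n (psi : state n.+1) (k : nat) (c : seq int) : algC :=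
  (\sum_(j < (n.+1 + n.+1)%N) (nth 0 c j)%:~R * nth 0 ((tos psi).1 ++ (tos psi).2) j) / sqrtC 2 ^+ k.

Lemma s2_neq0 : sqrtC 2 != 0 :> algC.
Proof. by rewrite sqrtC_eq0 pnatr_eq0. Qed.

Lemma fk_add n (psi : state n.+1) k c e :
  fk psi k.+1 (cadd (n.+1 + n.+1)%N c e) = (fk psi k c + fk psi k e) / sqrtC 2.
Proof.
rewrite /fk /cadd; under eq_bigr do rewrite nth_mkseq // intrD mulrDl.
rewrite big_split exprSr /=; have := s2_neq0; move: (sqrtC 2) => s hs.
by field; rewrite hs expf_neq0.
Qed.

Lemma fk_sub n (psi : state n.+1) k c e :
  fk psi k.+1 (csub (n.+1 + n.+1)%N c e) = (fk psi k c - fk psi k e) / sqrtC 2.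
Proof.
rewrite /fk /csub; under eq_bigr do rewrite nth_mkseq // intrB mulrBl.
rewrite sumrB exprSr /=; have := s2_neq0; move: (sqrtC 2) => s hs.
by field; rewrite hs expf_neq0.
Qed.

Lemma fk_nil n (psi : state n.+1) k : fk psi k [::] = 0.
Proof. by rewrite /fk big1 ?mul0r // => j _; rewrite nth_nil mul0r. Qed.

Lemma fk_unit n (psi : state n.+1) k c x : (x < n.+1 + n.+1)%N ->
  fk psi k (mkseq (fun j => (j == x)%:R * c) (n.+1 + n.+1)%N)
  = c%:~R * nth 0 ((tos psi).1 ++ (tos psi).2) x / sqrtC 2 ^+ k.
Proof.
move=> hx; rewrite /fk (bigD1 (Ordinal hx)) //= big1 ?addr0.
  by rewrite nth_mkseq // eqxx mul1r.
move=> j hj; rewrite nth_mkseq //.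
have -> : (nat_of_ord j == x) = false by apply/negbTE; apply: contra hj => /eqP h; apply/eqP/val_inj.
by rewrite mul0r mul0r.
Qed.

Lemma map_S0 n (psi : state n.+1) k c :
  (map (fk psi k) (S0 n.+1 c).1, map (fk psi k) (S0 n.+1 c).2)
  = (map (fun z => c%:~R * z / sqrtC 2 ^+ k) (tos psi).1,
     map (fun z => c%:~R * z / sqrtC 2 ^+ k) (tos psi).2).
Proof.
rewrite /S0 /tos !map_mkseq'; congr pair; apply: eq_in_mkseq => y hy /=.
- rewrite fk_unit; last by rewrite ltn_addr.
  by rewrite /tos nth_cat size_mkseq hy nth_mkseq.
- rewrite fk_unit; last by rewrite ltn_add2l.
  by rewrite /tos nth_cat size_mkseq ltnNge leq_addr /= addKn nth_mkseq.
Qed.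

Lemma map_S0_id n (psi : state n.+1) k (c : int) : (c%:~R : algC) = sqrtC 2 ^+ k ->
  (map (fk psi k) (S0 n.+1 c).1, map (fk psi k) (S0 n.+1 c).2) = tos psi.
Proof.
move=> hc; rewrite map_S0 hc.
have hc0 : (sqrtC 2 ^+ k : algC) != 0 by rewrite expf_neq0 // s2_neq0.
rewrite [in X in (X, _)](@eq_map _ _ _ id); last by move=> z; rewrite mulrC mulKf.
rewrite [in X in (_, X)](@eq_map _ _ _ id); last by move=> z; rewrite mulrC mulKf.
by rewrite !map_id; case: (tos psi).
Qed.

Lemma upper n m (c : int) : (c%:~R : algC) = sqrtC 2 ^+ m -> chk n.+1 m c -> pow_is_id n.+1 m.
Proof.
move=> hc /eqP hchk psi; apply: tos_inj.
have tos_iter : forall k, tos (iter k (@UHF n.+1) psi) = iter k (VsC n.+1) (tos psi).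
  by elim=> [|k IH] //=; rewrite tos_UHF IH.
have hmap : forall k, (map (fk psi k) (iter k (VsA n.+1) (S0 n.+1 1)).1,
                       map (fk psi k) (iter k (VsA n.+1) (S0 n.+1 1)).2)
          = iter k (VsC n.+1) (map (fk psi 0) (S0 n.+1 1).1, map (fk psi 0) (S0 n.+1 1).2).
  elim=> [|k IH]; first by case: (S0 n.+1 1).
  rewrite [in RHS]iterS -IH [iter k.+1 _ _]iterS.
  apply: Vs_map; [exact: fk_add | exact: fk_sub | exact: fk_nil].
rewrite tos_iter -{1}(map_S0_id psi (k:=0) (c:=1)) ?expr0 //.
rewrite -hmap /VsA; move: hchk; rewrite /chk => ->.
exact: map_S0_id.
Qed.


Lemma s2_neq0' : sqrtC 2 != 0 :> algC.
Proof. by rewrite sqrtC_eq0 pnatr_eq0. Qed.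

Lemma eig n (m : nat) (w w' l : algC) : w ^+ n.+1 = 1 -> w * w' = 1 ->
  l ^+ 2 - (w + w') / sqrtC 2 * l + 1 = 0 -> pow_is_id n.+1 m -> l ^+ m = 1.
Proof.
move=> hw hww hl hid.
have hs2 : sqrtC 2 ^+ 2 = 2 :> algC by rewrite sqrtCK.
have hs0 := s2_neq0'.
pose psi : state n.+1 := [ffun p : ('I_n.+1 * bool)%type => w ^+ p.1 * (if p.2 then w / sqrtC 2 - l else w / sqrtC 2)].
have wS : forall x : 'I_n.+1, w ^+ (ordS x) = w ^+ x * w.
  by move=> x; rewrite /= expr_mod // exprSr.
have wP : forall x : 'I_n.+1, w ^+ (ord_pred x) * w = w ^+ x.
  by move=> x; rewrite /= expr_mod // -exprSr addnS /= -addnS exprD hw mulr1.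
have hU : forall p, UHF psi p = l * psi p.
  case=> y [] ; rewrite /UHF /shift /coinHF /psi !ffunE /=.
  - rewrite -(wP y); move: (w ^+ ord_pred y) => W.
    apply/eqP; rewrite -subr_eq0; apply/eqP.
    have -> : (W * (w / sqrtC 2) + W * (w / sqrtC 2 - l)) / sqrtC 2 - l * (W * w * (w / sqrtC 2 - l))
      = W * w * (l ^+ 2 - (w + w') / sqrtC 2 * l + 1) + W * w * (2 - sqrtC 2 ^+ 2) / sqrtC 2 ^+ 2
        + W * l * (w * w' - 1) / sqrtC 2 by field.
    by rewrite hl hs2 hww !subrr !mulr0 !mul0r !addr0.
  - by rewrite wS; field.
have hscale : forall a (phi : state n.+1) p, UHF [ffun q => a * phi q] p = a * UHF phi p.
  by move=> a phi [x []]; rewrite /UHF /shift /coinHF !ffunE /= ?ffunE /=; ring.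
have hit : forall k p, iter k (@UHF n.+1) psi p = l ^+ k * psi p.
  elim=> [|k IH] p; first by rewrite expr0 mul1r.
  have -> : iter k.+1 (@UHF n.+1) psi = UHF [ffun q => l ^+ k * psi q].
    rewrite iterS; congr UHF; apply/(@ffunP _ _ (iter k (@UHF n.+1) psi)) => q.
    by rewrite IH [RHS]ffunE.
  by apply: eq_trans (hscale _ _ _) _; rewrite hU exprSr mulrA.
have h1 : iter m (@UHF n.+1) psi (ord0, false) = psi (ord0, false) by rewrite hid.
move: h1; rewrite hit ffunE /= expr0 mul1r.
have hw0 : w != 0 by apply/eqP => h0; move: hww; rewrite h0 mul0r => /eqP; rewrite eq_sym oner_eq0.
move=> /eqP; rewrite -{2}[w / sqrtC 2]mul1r -subr_eq0 -mulrBl mulf_eq0 subr_eq0 => /orP [/eqP //|].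
by rewrite mulf_eq0 invr_eq0 (negbTE hw0) (negbTE hs0).
Qed.

Lemma eigAint n m (w w' : algC) : (0 < m)%N -> w ^+ n.+1 = 1 -> w * w' = 1 ->
  pow_is_id n.+1 m -> (w + w') ^+ 2 / 2 \in Aint.
Proof.
move=> hm hw hww hid.
have hs2 : sqrtC 2 ^+ 2 = 2 :> algC by rewrite sqrtCK.
have hs0 := s2_neq0'.
pose c := (w + w') / sqrtC 2.
pose r := sqrtC (c ^+ 2 - 4).
have hr : r ^+ 2 = c ^+ 2 - 4 by rewrite sqrtCK.
pose l := (c + r) / 2.
have hl : l ^+ 2 - c * l + 1 = 0.
  have -> : l ^+ 2 - c * l + 1 = (r ^+ 2 - (c ^+ 2 - 4)) / 4 by rewrite /l; field.
  by rewrite hr subrr mul0r.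
have hlm : l ^+ m = 1 by apply: (eig hw hww _ hid); rewrite -/c.
have hl0 : l != 0.
  by apply/eqP => h0; move: hlm; rewrite h0 expr0n eqn0Ngt hm /= => /eqP; rewrite eq_sym oner_eq0.
have hlA : l \in Aint by apply: (Aint_unity_root hm); rewrite unity_rootE hlm.
have hliA : l^-1 \in Aint.
  have -> : l^-1 = l ^+ m.-1.
    by apply: (mulfI hl0); rewrite mulfV // -exprS prednK.
  exact: rpredX.
have hc : c = l + l^-1.
  have e : l ^+ 2 + 1 - c * l = 0 by rewrite -hl; ring.
  by apply: (mulIf hl0); rewrite mulrDl mulVf // -expr2 (subr0_eq e).
have -> : (w + w') ^+ 2 / 2 = c ^+ 2.
  by rewrite /c expr_div_n hs2.
by rewrite hc; apply: rpredX; apply: rpredD.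
Qed.


Lemma inv2X_notAint k : (0 < k)%N -> (2 ^+ k : algC)^-1 \notin Aint.
Proof.
move=> hk; apply/negP => hA.
have hQ : (2 ^+ k : algC)^-1 \in Crat by rewrite rpredV rpredX // rpred_nat.
have hZ := Cint_rat_Aint hQ hA.
have h2k : (2 ^+ k : algC) != 0 by rewrite expf_neq0 // pnatr_eq0.
have := norm_intr_ge1 hZ; rewrite invr_eq0 h2k => /(_ isT).
rewrite normfV normrX ger0_norm ?ler0n // invf_ge1 ?exprn_gt0 ?ltr0n //.
rewrite -natrX -[1]/(1%:R) ler_nat.
have := expn_gt0 2 k; case: k {hA hQ hZ h2k} hk => // k _; rewrite expnS; lia.
Qed.

Lemma odd_contra (N d : nat) : odd d -> (3 <= d)%N -> (d %| N)%N ->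
  (forall w : algC, w ^+ N = 1 -> (w + w^-1) ^+ 2 / 2 \in Aint) -> False.
Proof.
move=> hodd hd3 hdN Hkey.
have hd0 : (0 < d)%N by lia.
have [z hz] := C_prim_root_exists hd0.
have hzd : z ^+ d = 1 := prim_expr_order hz.
have hz0 : z != 0 by apply/eqP => h0; move: hzd; rewrite h0 expr0n -[d]prednK //= => /eqP; rewrite eq_sym oner_eq0.
pose y := z ^+ (d.+1)./2.
have hy2 : y ^+ 2 = z.
  rewrite /y -exprM muln2 halfK /= hodd /= subn0 exprS hzd mulr1 //.
have hy0 : y != 0 by rewrite expf_neq0.
have hwN : forall j, (y ^+ j) ^+ N = 1.
  move=> j; rewrite /y -!exprM; apply/eqP; rewrite -(prim_order_dvd hz).
  by rewrite dvdn_mull // dvdn_mull.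
have hX : forall j, (y ^+ j + (y ^+ j)^-1) ^+ 2 / 2 = (z ^+ j)^-1 * (1 + z ^+ j) ^+ 2 * 2^-1.
  move=> j; rewrite -hy2 exprAC; have : y ^+ j != 0 by rewrite expf_neq0.
  move: (y ^+ j) => t ht; field; rewrite ht //.
have hP : \prod_(0 <= j < d) ((y ^+ j + (y ^+ j)^-1) ^+ 2 / 2) \in Aint.
  by apply: rpred_prod => j _; apply: Hkey.
move: hP; under eq_bigr do rewrite hX.
rewrite big_split big_split /= prodr_const_nat subn0 prodfV prodrXr bin2_sum bin2odd //.
rewrite exprM hzd expr1n invr1 mul1r prodrXl.
have hprod : \prod_(0 <= j < d) (1 + z ^+ j) = 2.
  have := congr1 (fun p => p.[-1]) (factor_Xn_sub_1 hz).
  rewrite horner_prod /= !hornerE -signr_odd hodd expr1.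
  under eq_bigr do rewrite hornerXsubC.
  move=> h.
  have -> : \prod_(0 <= j < d) (1 + z ^+ j) = \prod_(0 <= j < d) ((-1) * (-1 - z ^+ j)).
    by apply: eq_bigr => j _; ring.
  rewrite big_split /= prodr_const_nat subn0 h -signr_odd hodd expr1; ring.
rewrite hprod.
case: d hodd hd3 {hd0 hz hzd y hy2 hy0 hwN hX hprod hdN} => [|[|[|e]]] // hodd _.
have -> : 2 ^+ 2 * 2^-1 ^+ e.+3 = (2 ^+ e.+1 : algC)^-1.
  rewrite exprVn; have h2 : (2 : algC) != 0 by rewrite pnatr_eq0.
  by rewrite !exprS; field; rewrite ?expf_neq0.
by apply/negP/inv2X_notAint.
Qed.

Lemma sixteen_contra (N : nat) : (16 %| N)%N ->
  (forall w : algC, w ^+ N = 1 -> (w + w^-1) ^+ 2 / 2 \in Aint) -> False.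
Proof.
move=> hN Hkey.
have [z hz] := C_prim_root_exists (isT : (0 < 16)%N).
have hzN : z ^+ N = 1 by apply/eqP; rewrite -(prim_order_dvd hz).
have hz16 : z ^+ 16 = 1 := prim_expr_order hz.
have hz0 : z != 0 by apply/eqP => h0; move: hz16; rewrite h0 expr0n /= => /eqP; rewrite eq_sym oner_eq0.
have hA : z ^+ 8 + 1 = 0.
  have h8 : z ^+ 8 != 1 by rewrite -(prim_order_dvd hz).
  have : (z ^+ 8 - 1) * (z ^+ 8 + 1) = 0.
    by rewrite -subr_sqr -exprM hz16 expr1n subrr.
  by move/eqP; rewrite mulf_eq0 subr_eq0 (negbTE h8) /= => /eqP.
have h1 := Hkey z hzN.
have h3 : ((z ^+ 3) + (z ^+ 3)^-1) ^+ 2 / 2 \in Aint.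
  by apply: Hkey; rewrite exprAC hzN expr1n.
have := rpredM h1 h3.
have -> : (z + z^-1) ^+ 2 / 2 * ((z ^+ 3 + (z ^+ 3)^-1) ^+ 2 / 2)
   = (2 ^+ 1)^-1 + (z ^+ 8 + 1) * ((z ^+ 8 + 1) + 2 * (z ^+ 6 + z ^+ 2) + z ^+ 4 + 2 - 2) / (4 * z ^+ 8).
  by field; rewrite ?expf_neq0 ?hz0 ?pnatr_eq0.
rewrite hA !mul0r addr0.
by apply/negP/inv2X_notAint.
Qed.

Lemma eig8 n m : (0 < m)%N -> pow_is_id n.+1 m -> (8 %| m)%N.
Proof.
move=> hm hid.
have hs2 : sqrtC 2 ^+ 2 = 2 :> algC by rewrite sqrtCK.
have hs0 := s2_neq0'.
pose l := (1 + 'i) / sqrtC 2 : algC.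
have hl : l ^+ 2 - (1 + 1) / sqrtC 2 * l + 1 = 0.
  have -> : l ^+ 2 - (1 + 1) / sqrtC 2 * l + 1
      = ('i ^+ 2 - 1 + sqrtC 2 ^+ 2) / sqrtC 2 ^+ 2 by rewrite /l; field.
  by rewrite hs2 sqrCi; field.
have hlm : l ^+ m = 1 by apply: (eig (w := 1) (w' := 1) (expr1n _ _) (mulr1 1) hl hid).
have hl2 : l ^+ 2 = 'i.
  have -> : l ^+ 2 = ('i ^+ 2 + 1 + 2 * 'i) / sqrtC 2 ^+ 2 by rewrite /l; field.
  by rewrite sqrCi hs2; field.
have hl4 : l ^+ 4 = -1 by rewrite -[4%N]/(2 * 2)%N exprM hl2 sqrCi.
have hl8 : l ^+ 8 = 1 by rewrite -[8%N]/(4 * 2)%N exprM hl4 sqrrN expr1n.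
have [k hk hk8] := prim_order_exists (isT : (0 < 8)%N) hl8.
have hk4 : ~~ (k %| 4)%N.
  rewrite (prim_order_dvd hk) hl4 -subr_eq0 -opprD oppr_eq0 -mulr2n pnatr_eq0 //.
have hkle : (k <= 8)%N by apply: dvdn_leq.
have hk8' : k = 8%N.
  by move: hkle hk8 hk4; case: k {hk} => [|[|[|[|[|[|[|[|[|k]]]]]]]]].
by rewrite -hk8' (prim_order_dvd hk) hlm.
Qed.

Lemma eig3 m : (0 < m)%N -> pow_is_id 8 m -> (3 %| m)%N.
Proof.
move=> hm hid.
have hs2 : sqrtC 2 ^+ 2 = 2 :> algC by rewrite sqrtCK.
have hs0 := s2_neq0'.
have [q hq] := C_prim_root_exists (isT : (0 < 3)%N).
have hq3 : q ^+ 3 = 1 := prim_expr_order hq.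
have hq1 : q != 1 by move: (prim_order_dvd hq 1); rewrite expr1 => <-.
have hqq : q ^+ 2 + q + 1 = 0.
  have : (q - 1) * (q ^+ 2 + q + 1) = 0.
    have -> : (q - 1) * (q ^+ 2 + q + 1) = q ^+ 3 - 1 by ring.
    by rewrite hq3 subrr.
  by move/eqP; rewrite mulf_eq0 subr_eq0 (negbTE hq1) /= => /eqP.
pose l := (1 + 'i) / sqrtC 2 : algC.
pose w := - l.
pose w' := - ((1 - 'i) / sqrtC 2) : algC.
have hl2 : l ^+ 2 = 'i.
  have -> : l ^+ 2 = ('i ^+ 2 + 1 + 2 * 'i) / sqrtC 2 ^+ 2 by rewrite /l; field.
  by rewrite sqrCi hs2; field.
have hw8 : w ^+ 8 = 1.
  by rewrite -[8%N]/(2 * 4)%N exprM sqrrN hl2 -[4%N]/(2 * 2)%N exprM sqrCi sqrrN expr1n.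
have hww : w * w' = 1.
  have -> : w * w' = (1 - 'i ^+ 2) / sqrtC 2 ^+ 2 by rewrite /w /w' /l; field.
  by rewrite sqrCi hs2; field.
have hc : (w + w') / sqrtC 2 = -1.
  have -> : (w + w') / sqrtC 2 = - (2 / sqrtC 2 ^+ 2) by rewrite /w /w' /l; field.
  by rewrite hs2 divff // pnatr_eq0.
have hl : q ^+ 2 - (w + w') / sqrtC 2 * q + 1 = 0 by rewrite hc mulN1r opprK.
have hqm : q ^+ m = 1 by apply: (eig (n := 7) hw8 hww hl hid).
by rewrite (prim_order_dvd hq) hqm.
Qed.

Lemma key (n m : nat) : (0 < m)%N -> pow_is_id n.+1 m ->
  forall w : algC, w ^+ n.+1 = 1 -> (w + w^-1) ^+ 2 / 2 \in Aint.
Proof.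
move=> hm hid w hw.
have hw0 : w != 0.
  by apply/eqP => h0; move: hw; rewrite h0 expr0n /= => /eqP; rewrite eq_sym oner_eq0.
by apply: (eigAint hm hw _ hid); rewrite mulfV.
Qed.

Lemma infinite (n m : nat) : (1 < n.+1)%N -> n.+1 != 2%N -> n.+1 != 4%N -> n.+1 != 8%N ->
  (0 < m)%N -> ~ pow_is_id n.+1 m.
Proof.
move=> h1 h2 h4 h8 hm hid.
have Hkey := key hm hid.
have [h16|h16] := boolP (16 %| n.+1)%N; first exact: sixteen_contra h16 Hkey.
have [d hd hN] := pfactor_coprime (isT : prime 2) (isT : (0 < n.+1)%N).
have hodd : odd d by rewrite -coprimen2 coprime_sym.
have hdN : (d %| n.+1)%N by rewrite hN dvdn_mulr.
have [hd1|hd1] := eqVneq d 1%N.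
  move: hN; rewrite hd1 mul1n => hN.
  move: h2 h4 h8 h16 h1; rewrite hN.
  case: (logn 2 n.+1) => [|[|[|[|a]]]] //.
  by rewrite !expnS mulnA mulnA mulnA /= dvdn_mulr.
apply: (odd_contra hodd _ hdN Hkey).
case: d {hd hN hdN} hodd hd1 => [|[|[|d]]] //.
Qed.

Local Close Scope ring_scope.

Theorem theorem5p2 (N : nat) (hN : (2 <= N)%N) :
  period_is N (if N == 2 then Some 8
               else if N == 4 then Some 8
               else if N == 8 then Some 24
               else None).
Proof.
case: N hN => [|n] // hN.
have hs : forall k, (sqrtC 2 ^+ (2 * k)%N = (2 ^ k)%:R :> algC)%R.
  by move=> k; rewrite exprM sqrtCK natrX.
have [->|h2] := eqVneq n.+1 2%N.
  split=> //; split.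
    by apply: upper chk2; rewrite (hs 4%N).
  move=> m /andP [hm hm8] hid; have := eig8 hm hid.
  by move/(dvdn_leq hm); rewrite leqNgt hm8.
have [->|h4] := eqVneq n.+1 4%N.
  split=> //; split.
    by apply: upper chk4; rewrite (hs 4%N).
  move=> m /andP [hm hm8] hid; have := eig8 hm hid.
  by move/(dvdn_leq hm); rewrite leqNgt hm8.
have [->|h8] := eqVneq n.+1 8%N.
  split=> //; split.
    by apply: upper chk8; rewrite (hs 12%N).
  move=> m /andP [hm hm8] hid.
  have h24 : (24 %| m)%N.
    by rewrite -[24%N]/(8 * 3)%N Gauss_dvd // (eig8 hm hid) (eig3 hm hid).
  by move: (dvdn_leq hm h24); rewrite leqNgt hm8.
move=> m hm.
exact: infinite.
Qed.
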